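(* Let $X$ be a convex metric space over a Boolean ring $B$, $0\in X$, and let $\{x_{1},\dots,x_{n}\}$ be a base of $(X,0)$. Then for every integer $k\ge1$ the ideal $I_k(X)$ is principal, $\alpha_{k}(X)=|x_{k}|$ for $k\le n$, and $\alpha_{k}(X)=0$ for $k>n$.
   Context: $B$ is a Boolean ring ($a\vee b=a+b+ab$, $a\le b\iff ab=a$; $a_1\oplus\cdots\oplus a_n$ denotes a sum of pairwise disjoint elements). A Boolean metric space over $B$: set $X$ with $d:X\times X\to B$, $d(x,y)=0\iff x=y$, symmetric, $d(x,z)\le d(x,y)\vee d(y,z)$. For $x_1,\dots,x_n\in X$, $a_i\in B$ with $a_1\oplus\cdots\oplus a_n=1$, $x$ is a convex combination of the $x_i$ with coefficients $a_i$ if $a_id(x,x_i)=0$ for all $i$; $X$ is convex if all such combinations exist. In $(X,0)$: $|x|=d(0,x)$; $x\perp y$ iff $d(x,y)=|x|\vee|y|$; a finite $R\subseteq X$ is orthogonal if $0\notin R$ and distinct elements are orthogonal; a referential is an orthogonal $R$ such that every element of $X$ is a convex combination of elements of $R\cup\{0\}$; a base is a referential $\{x_1,\dots,x_n\}$ with $|x_1|\ge\cdots\ge|x_n|$. For integer $k>0$, $I_k(X)$ is the ideal of $B$ generated by $\{\prod_{0\le i<j\le k}d(u_i,u_j): u_0,\dots,u_k\in X\}$, and when principal, $\alpha_k(X)$ is its generator. *)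

(* Defs.v *)
From HB Require Import structures.
From mathcomp Require Import all_boot all_order all_algebra.
Set Implicit Arguments. Unset Strict Implicit. Unset Printing Implicit Defensive.
Import GRing.Theory.
Local Open Scope ring_scope.

Section BoolMetric.
Variable B : comPzRingType.

Definition bjoin (a b : B) : B := a + b + a * b.
Definition ble (a b : B) : Prop := a * b = a.

Definition is_partition (n : nat) (a : 'I_n -> B) : Prop :=
  (forall i j : 'I_n, i != j -> a i * a j = 0) /\ \sum_(i < n) a i = 1.

Variable X : Type.
Variable d : X -> X -> B.

Definition is_bool_metric : Prop :=
  (forall x y, d x y = 0 <-> x = y) /\
  (forall x y, d x y = d y x) /\
  (forall x y z, ble (d x z) (bjoin (d x y) (d y z))).

Definition is_conv_comb (x : X) (n : nat) (xs : 'I_n -> X) (a : 'I_n -> B) : Prop :=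
  forall i, a i * d x (xs i) = 0.

Definition is_convex : Prop :=
  forall (n : nat) (xs : 'I_n -> X) (a : 'I_n -> B),
    is_partition a -> exists x, is_conv_comb x xs a.

Variable o : X.

Definition bnorm (x : X) : B := d o x.

Definition borth (x y : X) : Prop := d x y = bjoin (bnorm x) (bnorm y).

(* the finite set R = {xs 0, ..., xs (n-1)} (xs injective, so |R| = n) is orthogonal *)
Definition is_orthogonal (n : nat) (xs : 'I_n -> X) : Prop :=
  (forall i j, xs i = xs j -> i = j) /\
  (forall i, xs i <> o) /\
  (forall i j, i != j -> borth (xs i) (xs j)).

Definition is_referential (n : nat) (xs : 'I_n -> X) : Prop :=
  is_orthogonal xs /\
  forall x : X, exists (m : nat) (ys : 'I_m -> X) (a : 'I_m -> B),
    (forall l, (exists i, ys l = xs i) \/ ys l = o) /\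
    is_partition a /\ is_conv_comb x ys a.

(* base {x_1,...,x_n} with |x_1| >= ... >= |x_n|; here x_{i+1} = xs i *)
Definition is_base (n : nat) (xs : 'I_n -> X) : Prop :=
  is_referential xs /\
  forall i j : 'I_n, (i <= j)%N -> ble (bnorm (xs j)) (bnorm (xs i)).

Definition Ik_gen (k : nat) (c : B) : Prop :=
  exists u : 'I_k.+1 -> X,
    c = \prod_(i < k.+1) \prod_(j < k.+1 | (i < j)%N) d (u i) (u j).

End BoolMetric.

Definition in_gen_ideal (B : comPzRingType) (S : B -> Prop) (c : B) : Prop :=
  exists (m : nat) (r s : 'I_m -> B),
    (forall l, S (s l)) /\ c = \sum_(l < m) r l * s l.

Definition is_generator (B : comPzRingType) (I : B -> Prop) (g : B) : Prop :=
  forall c, I c <-> exists r, c = g * r.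

Definition is_principal (B : comPzRingType) (I : B -> Prop) : Prop :=
  exists g, is_generator I g.

(* Main.v *)
Require Import Defs.
From mathcomp Require Import all_boot all_order all_algebra.
From Stdlib Require Import Classical ClassicalEpsilon Lia.
Import GRing.Theory.
Local Open Scope ring_scope.
Set Implicit Arguments. Unset Strict Implicit. Unset Printing Implicit Defensive.
Section Alg.
Variable B : comPzRingType.
Hypothesis Bbool : forall a : B, a * a = a.

Lemma char2 (a : B) : a + a = 0.
Proof.
have H := Bbool (a + a).
rewrite mulrDl !mulrDr !Bbool in H.
have := congr1 (fun z => z - (a + a)) H.
by rewrite /= addrK subrr.
Qed.

Lemma Bcompl (x : B) : x * (1 - x) = 0.
Proof. by rewrite mulrBr mulr1 Bbool subrr. Qed.

Lemma Bcompl' (x : B) : (1 - x) * x = 0.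
Proof. by rewrite mulrC Bcompl. Qed.

Lemma L1 (a b c f : B) : c * (a + b + a * b) = c -> f * a = 0 -> f * c = f * c * b.
Proof.
move=> Hc Hf.
rewrite -{1}Hc !mulrDr !mulrA.
have E : f * c * a = 0 by rewrite (mulrC f c) -mulrA Hf mulr0.
by rewrite E mul0r add0r addr0.
Qed.

Lemma join_le (a b g : B) : a * g = a -> b * g = b -> (a + b + a * b) * g = a + b + a * b.
Proof. by move=> Ha Hb; rewrite !mulrDl -mulrA Hb Ha. Qed.

Lemma join_ge (a b g : B) : g * a = g -> g * b = g -> g * (a + b + a * b) = g.
Proof. by move=> Ha Hb; rewrite !mulrDr Ha Hb mulrA Ha Hb char2 add0r. Qed.

Lemma zero_compl (a x : B) : a * x = 0 -> a * (1 - x) = a.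
Proof. by move=> H; rewrite mulrBr mulr1 H subr0. Qed.

End Alg.
Definition good (k n : nat) (x : option 'I_n) : bool :=
  if x is Some t then (k.-1 <= t)%N else true.

Arguments good k {n} x.
Lemma comb (k n : nat) (h : 'I_k.+1 -> option 'I_n) : injective h -> (0 < k)%N ->
  exists a b, a != b /\ good k (h a) /\ good k (h b).
Proof.
move=> hinj k0.
pose A := [set a | good k (h a)].
have HC : (#|~: A| <= k.-1)%N.
  rewrite -(card_imset _ hinj).
  apply: leq_trans (_ : #|[set (insub (val s) : option 'I_n) | s : 'I_k.-1]| <= _)%N.
    apply: subset_leq_card; apply/subsetP => x /imsetP [a]; rewrite !inE /good => Ha ->.
    case E: (h a) Ha => [t|] //; rewrite -ltnNge => Ht.
    by apply/imsetP; exists (Ordinal Ht) => //=; rewrite valK.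
  by apply: leq_trans (leq_imset_card _ _) _; rewrite card_ord.
have HA : (1 < #|A|)%N.
  have := cardsC A; rewrite card_ord => E.
  have K : k = k.-1.+1 by rewrite prednK.
  move: (#|A|) (#|~: A|) E HC K => x y E HC K.
  move/leP: HC => HC; apply/ltP; move: E; rewrite -plusE => E. lia.
case/card_gt1P: HA => a [b [Ha Hb Hab]].
by exists a, b; split=> //; move: Ha Hb; rewrite !inE => -> ->.
Qed.
Section Met.
Variable B : comPzRingType.
Hypothesis Bbool : forall a : B, a * a = a.
Variables (X : Type) (d : X -> X -> B) (o : X) (n : nat) (xs : 'I_n -> X).
Hypothesis Hm : is_bool_metric d.
Hypothesis Hb : is_base d o xs.

Lemma dxx x : d x x = 0. Proof. by apply/(proj1 Hm). Qed.
Lemma dsym x y : d x y = d y x. Proof. exact: (proj1 (proj2 Hm)). Qed.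
Lemma dtri x y z : d x z * (d x y + d y z + d x y * d y z) = d x z.
Proof. exact: (proj2 (proj2 Hm)). Qed.

Definition R0 (z : X) := (exists j, z = xs j) \/ z = o.

Lemma region (u : nat -> X) (N : nat) : forall (e : B),
  (forall y : nat -> X, (forall i, (i < N)%N -> R0 (y i)) ->
     e * \prod_(i < N) (1 - d (u i) (y i)) = 0) -> e = 0.
Proof.
elim: N => [|N IH] e H.
  by have := H (fun _ => o) (fun i => ltac:(done)); rewrite big_ord0 mulr1.
apply: IH => y Hy.
have [m [ys [a [Hys [[_ Hsum] Hcc]]]]] := proj2 (proj1 Hb) (u N).
set e' := e * _.
rewrite -(mulr1 e') -Hsum big_distrr /=; apply: big1 => l _.
pose y' := fun i => if i == N then ys l else y i.
have Hy' : forall i, (i < N.+1)%N -> R0 (y' i).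
  move=> i; rewrite ltnS leq_eqVlt /y'; case: (i == N) => /= [_|/Hy //].
  by case: (Hys l) => [[j ->]|->]; [left; exists j|right].
have := H y' Hy'.
rewrite big_ord_recr /= /y' eqxx.
have -> : \prod_(i < N) (1 - d (u (widen_ord (leqnSn N) i)) (if (widen_ord (leqnSn N) i : nat) == N then ys l else y (widen_ord (leqnSn N) i)))
   = \prod_(i < N) (1 - d (u i) (y i)).
  by apply: eq_bigr => i _ /=; rewrite ltn_eqF.
move=> E.
rewrite -(zero_compl (Hcc l)) /e'.
by rewrite mulrCA -(mulrA e) E mulr0.
Qed.


Lemma L1r (a b c f : B) : c * (a + b + a * b) = c -> f * b = 0 -> f * c = f * c * a.
Proof. by move=> H; apply: L1; rewrite (addrC b) (mulrC b). Qed.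

Lemma alg1 (c D g F : B) : F * D = F * D * g -> c * D * (1 - g) * F = 0.
Proof.
move=> H.
have -> : c * D * (1 - g) * F = c * (1 - g) * (F * D).
  by rewrite (mulrAC c D (1 - g)) (mulrC F D) mulrA.
by rewrite H (mulrC (F * D)) mulrA -(mulrA c) (Bcompl' Bbool) mulr0 mul0r.
Qed.

Lemma factor k (u : 'I_k.+1 -> X) (a b : 'I_k.+1) : a != b ->
  (\prod_(i < k.+1) \prod_(j < k.+1 | (i < j)%N) d (u i) (u j)) * d (u a) (u b)
  = \prod_(i < k.+1) \prod_(j < k.+1 | (i < j)%N) d (u i) (u j).
Proof.
have gen : forall a b : 'I_k.+1, (a < b)%N ->
  (\prod_(i < k.+1) \prod_(j < k.+1 | (i < j)%N) d (u i) (u j)) * d (u a) (u b)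
  = \prod_(i < k.+1) \prod_(j < k.+1 | (i < j)%N) d (u i) (u j).
  move=> a' b' ab.
  rewrite (bigD1 a') //= (bigD1 b') //=.
  by rewrite mulrC !mulrA Bbool.
move=> ab; case: (ltngtP a b) => h; first exact: gen.
  by rewrite dsym; apply: gen.
by move: ab; rewrite (val_inj h) eqxx.
Qed.

Lemma tri2 (F : B) x1 x2 y1 y2 : F * d x1 y1 = 0 -> F * d x2 y2 = 0 ->
  F * d x1 x2 = F * d x1 x2 * d y1 y2.
Proof.
move=> H1 H2.
have h1 := L1 (dtri x1 y1 x2) H1.
have h2 : F * d y1 x2 = F * d y1 x2 * d y1 y2.
  by apply: (L1r (dtri y1 y2 x2)); rewrite dsym.
have E : F * d x1 x2 * d y1 x2 = d x1 x2 * (F * d y1 x2) by rewrite mulrAC mulrC.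
by rewrite {1}h1 E h2 mulrA -E -h1.
Qed.

Definition elt (x : option 'I_n) : X := if x is Some j then xs j else o.

Lemma elt_le k (g : B) (Hg : forall s : 'I_n, (k.-1 <= s)%N -> d o (xs s) * g = d o (xs s))
  (x1 x2 : option 'I_n) : good k x1 -> good k x2 -> x1 != x2 ->
  d (elt x1) (elt x2) * g = d (elt x1) (elt x2).
Proof.
case: x1 => [s|]; case: x2 => [t|] //= hs ht st.
- have st' : s != t by apply/eqP => E; move: st; rewrite E eqxx.
  rewrite ((proj2 (proj2 (proj1 (proj1 Hb)))) s t st') /bjoin /bnorm.
  exact: join_le (Hg s hs) (Hg t ht).
- by rewrite dsym; apply: Hg.
- by apply: Hg.
Qed.

Lemma upper k (u : 'I_k.+1 -> X) (g : B)
  (Hg : forall s : 'I_n, (k.-1 <= s)%N -> d o (xs s) * g = d o (xs s)) :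
  (0 < k)%N ->
  (\prod_(i < k.+1) \prod_(j < k.+1 | (i < j)%N) d (u i) (u j)) * (1 - g) = 0.
Proof.
move=> k0.
set c := \prod_(i < k.+1) _.
pose u' t := u (inord t).
apply: (@region u' k.+1) => y Hy.
set F := \prod_(i < k.+1) (1 - d (u' i) (y i)).
have Eu : forall a : 'I_k.+1, u' a = u a by move=> a; rewrite /u' inord_val.
have HF : forall a : 'I_k.+1, F * d (u a) (y a) = 0.
  by move=> a; rewrite /F (bigD1 a) //= Eu mulrAC (Bcompl' Bbool) mul0r.
have key : forall a b : 'I_k.+1, a != b -> d (y a) (y b) * g = d (y a) (y b) ->
    c * (1 - g) * F = 0.
  move=> a b ab Hg'.
  have Fc := factor u ab; rewrite -/c in Fc.
  rewrite -Fc; apply: alg1.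
  by rewrite {1}(tri2 (HF a) (HF b)) -Hg' mulrA -(tri2 (HF a) (HF b)).
case: (classic (exists a b : 'I_k.+1, a != b /\ y a = y b)) => [[a [b [ab E]]]|ND].
  by apply: (key a b ab); rewrite E dxx mul0r.
have nd : forall a b : 'I_k.+1, y a = y b -> a = b.
  move=> a b E; apply/eqP; apply: contraT => ab; by case: ND; exists a, b.
have ex : forall a : 'I_k.+1, exists x : option 'I_n, y a = elt x.
  move=> a; case: (Hy a (ltn_ord a)) => [[j ->]|->]; first by exists (Some j).
  by exists None.
pose code a := proj1_sig (constructive_indefinite_description _ (ex a)).
have Hcode : forall a : 'I_k.+1, y a = elt (code a).
  by move=> a; exact: (proj2_sig (constructive_indefinite_description _ (ex a))).
have cinj : injective code.
  by move=> a b E; apply: nd; rewrite !Hcode E.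
have [a [b [ab [ga gb]]]] := comb cinj k0.
apply: (key a b ab); rewrite !Hcode; apply: (elt_le Hg) => //.
by apply/eqP => E; move: ab; rewrite (cinj _ _ E) eqxx.
Qed.


Lemma witness (i : 'I_n) : Ik_gen d i.+1 (d o (xs i)).
Proof.
pose u (j : 'I_i.+2) : X := if (j : nat) is t.+1 then xs (insubd i t) else o.
exists u.
set g := d o (xs i).
have Hmono : forall a b : 'I_n, (a <= b)%N -> d o (xs b) * d o (xs a) = d o (xs b).
  exact: (proj2 Hb).
have Hf : forall a b : 'I_i.+2, (a < b)%N -> g * d (u a) (u b) = g.
  move=> [a ha] [[|t] hb] //= ab.
  have tn : (t < n)%N by apply: leq_ltn_trans (ltn_ord i); rewrite -ltnS -ltnS.
  have vt : val (insubd i t : 'I_n) = t by rewrite val_insubd tn.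
  have ti : ((insubd i t : 'I_n) <= i)%N by rewrite vt -ltnS -ltnS.
  case: a ha ab => [|s] ha ab /=; first exact: Hmono.
  have sn : (s < n)%N by apply: ltn_trans tn.
  have vs : val (insubd i s : 'I_n) = s by rewrite val_insubd sn.
  have st : (insubd i s : 'I_n) != insubd i t.
    by apply/eqP => E; move: ab; rewrite -vs E vt ltnn.
  rewrite ((proj2 (proj2 (proj1 (proj1 Hb)))) _ _ st) /bjoin /bnorm.
  apply: (join_ge Bbool); apply: Hmono => //.
  have ti0 : (t <= i)%N by rewrite -vt.
  have ab' : (s < t)%N := ab.
  by rewrite vs; apply: ltnW; exact: leq_trans ab' ti0.
have gP : g * (\prod_(a < i.+2) \prod_(b < i.+2 | (a < b)%N) d (u a) (u b)) = g.
  apply: (big_ind (fun c => g * c = g)) => [|x y hx hy|a _]; first by rewrite mulr1.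
    by rewrite mulrA hx hy.
  apply: (big_ind (fun c => g * c = g)) => [|x y hx hy|b ab]; first by rewrite mulr1.
    by rewrite mulrA hx hy.
  exact: Hf.
have n0 : (ord0 : 'I_i.+2) != ord_max by [].
have F := factor u n0.
have E : d (u ord0) (u ord_max) = g.
  by rewrite /u /= /g; congr (d o (xs _)); apply: val_inj; rewrite val_insubd ltn_ord.
rewrite E in F.
by rewrite -{1}gP mulrC F.
Qed.

End Met.

Lemma gen_ok (B : comPzRingType) (S : B -> Prop) (g : B) :
  (forall c, S c -> c = g * c) -> in_gen_ideal S g -> is_generator (in_gen_ideal S) g.
Proof.
move=> H1 [m [r [s [Hs Eg]]]] c; split.
  move=> [m' [r' [s' [Hs' ->]]]]; exists (\sum_(l < m') r' l * s' l).
  rewrite big_distrr; apply: eq_bigr => l _ /=.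
  by rewrite {1}(H1 _ (Hs' l)) mulrCA.
move=> [r0 ->]; exists m, (fun l => r0 * r l), s; split=> //.
rewrite Eg mulrC big_distrr; apply: eq_bigr => l _ /=; by rewrite mulrA.
Qed.

Theorem mainTheorem6 (B : comPzRingType) (Bbool : forall a : B, a * a = a)
  (X : Type) (d : X -> X -> B) (o : X) (n : nat) (xs : 'I_n -> X) :
  is_bool_metric d -> is_convex d -> is_base d o xs ->
  forall k : nat, (0 < k)%N ->
    is_principal (in_gen_ideal (Ik_gen d k)) /\
    (forall i : 'I_n, k = i.+1 -> is_generator (in_gen_ideal (Ik_gen d k)) (bnorm d o (xs i))) /\
    ((n < k)%N -> is_generator (in_gen_ideal (Ik_gen d k)) 0).
Proof.
move=> Hm Hc Hb k k0.
have gen_of : forall g, (forall s : 'I_n, (k.-1 <= s)%N -> d o (xs s) * g = d o (xs s)) ->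
    in_gen_ideal (Ik_gen d k) g -> is_generator (in_gen_ideal (Ik_gen d k)) g.
  move=> g Hg Hin; apply: gen_ok Hin => c [u ->].
  have := upper Bbool Hm Hb u Hg k0.
  set P := \prod_(i < k.+1) _ => E.
  apply/eqP; rewrite mulrC -subr_eq0 -{1}(mulr1 P) -mulrBr; exact/eqP.
have Hmono : forall a b : 'I_n, (a <= b)%N -> d o (xs b) * d o (xs a) = d o (xs b).
  exact: (proj2 Hb).
have Hi : forall i : 'I_n, k = i.+1 -> is_generator (in_gen_ideal (Ik_gen d k)) (bnorm d o (xs i)).
  move=> i ki; apply: gen_of => [s hs|]; first by apply: Hmono; rewrite ki in hs.
  exists 1%N, (fun _ => 1), (fun _ => d o (xs i)); split.
    by move=> _; rewrite ki; exact: witness.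
  by rewrite big_ord1 mul1r.
have H0 : (n < k)%N -> is_generator (in_gen_ideal (Ik_gen d k)) 0.
  move=> nk; apply: gen_of => [s hs|].
    exfalso; have := ltn_ord s; move: hs nk; rewrite -(prednK k0) /=.
    move=> /leP hs /leP nk /leP sn; lia.
  exists 0%N, (fun _ => 0), (fun _ => 0); split; first by case.
  by rewrite big_ord0.
split; last by split.
case: (leqP k n) => kn.
  have kn' : (k.-1 < n)%N by rewrite prednK.
  exists (bnorm d o (xs (Ordinal kn'))); apply: Hi => /=; by rewrite prednK.
by exists 0; exact: H0.
Qed.
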